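(* Let $\mathrm{Alg}_r(G_1)$ be the category of reachable pointed automata over $\Sigma$ and $\mathcal{C}$ the category of congruences on the monoid $\Sigma^\ast$ (both as described in the context). Define $T:\mathrm{Alg}_r(G_1)\to\mathcal{C}$ on objects by $T(X,\overline{x},\delta)=\ker\delta^\sharp$, and on morphisms by sending a morphism $h:(X,\overline{x},\delta_X)\to(Y,\overline{y},\delta_Y)$ to the inclusion $\ker\delta_X^\sharp\subseteq\ker\delta_Y^\sharp$. Define $M:\mathcal{C}\to\mathrm{Alg}_r(G_1)$ on objects by $M(C)=(\Sigma^\ast/C,\,[\epsilon]_C,\,\sigma_C)$ with $\sigma_C([w]_C)(a)=[wa]_C$ for $w\in\Sigma^\ast$, $a\in\Sigma$, and on a morphism $C\subseteq D$ by the map $[w]_C\mapsto[w]_D$. Then $T$ and $M$ are well-defined functors and $T$ is a right adjoint of $M$ (i.e. $M\dashv T$).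
   Context: $\Sigma$ is a fixed finite alphabet, $\Sigma^\ast$ the free monoid of finite words with empty word $\epsilon$. A pointed automaton is a triple $(X,\overline{x},\delta)$ with $X$ a set (possibly infinite), $\overline{x}\in X$ and $\delta:X\to X^\Sigma$; $\delta$ is extended to $X\to X^{\Sigma^\ast}$ by $\delta(x)(\epsilon)=x$, $\delta(x)(wa)=\delta(\delta(x)(w))(a)$. It is reachable if every $x\in X$ equals $\delta(\overline{x})(u)$ for some $u\in\Sigma^\ast$. A morphism $h:(X,\overline{x},\delta_X)\to(Y,\overline{y},\delta_Y)$ is a map $h:X\to Y$ with $h(\overline{x})=\overline{y}$ and $h(\delta_X(x)(a))=\delta_Y(h(x))(a)$ for all $x\in X,a\in\Sigma$. $\mathrm{Alg}_r(G_1)$ is the category of reachable pointed automata and such morphisms. For a pointed automaton, $\delta^\sharp:\Sigma^\ast\to X^X$ is the monoid homomorphism (into $X^X$ under composition) $\delta^\sharp(u)(x)=\delta(x)(u)$, so $\ker\delta^\sharp=\{(u,v)\in\Sigma^\ast\times\Sigma^\ast\mid \forall x\in X:\ \delta(x)(u)=\delta(x)(v)\}$. $\mathcal{C}$ is the category whose objects are congruences on the monoid $\Sigma^\ast$ and whose morphisms are inclusions (so it is a preorder). *)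

(* Defs.v *)
From Stdlib Require Import FunctionalExtensionality PropExtensionality.
From mathcomp Require Import all_boot.
Set Implicit Arguments. Unset Strict Implicit. Unset Printing Implicit Defensive.

Section Automata.
Variable Sigma : finType.

Definition word := seq Sigma.

(* Pointed automaton (X, xbar, delta) with delta : X -> X^Sigma (curried). *)
Record Aut := MkAut { st : Type; init : st; trans : st -> Sigma -> st }.

Definition dstar (A : Aut) (x : st A) (w : word) : st A := foldl (@trans A) x w.

Definition reachable (A : Aut) : Prop :=
  forall x : st A, exists u : word, x = dstar (init A) u.

Definition is_morph (A B : Aut) (h : st A -> st B) : Prop :=
  h (init A) = init B /\ forall (x : st A) (a : Sigma), h (trans x a) = trans (h x) a.

(* kernel of delta^sharp : Sigma^* -> X^X *)
Definition ker (A : Aut) (u v : word) : Prop :=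
  forall x : st A, dstar x u = dstar x v.

(* Congruences on the monoid Sigma^*; morphisms in C are inclusions. *)
Definition is_congruence (R : word -> word -> Prop) : Prop :=
  [/\ (forall u, R u u), (forall u v, R u v -> R v u),
      (forall u v w, R u v -> R v w -> R u w)
    & (forall u u' v v', R u u' -> R v v' -> R (u ++ v) (u' ++ v'))].

Record congr := Congr { crel :> word -> word -> Prop; crel_cong : is_congruence crel }.

Definition incl (R S : word -> word -> Prop) : Prop := forall u v, R u v -> S u v.

(* The quotient Sigma^*/C: the set of equivalence classes [w]_C = {v | C w v}. *)
Definition Mcar (C : congr) : Type := {S : word -> Prop | exists w, S = C w}.

Definition cls (C : congr) (w : word) : Mcar C := exist _ (crel C w) (ex_intro _ w erefl).

Lemma congr_rcons (C : congr) w w' a : C w w' -> C (rcons w a) (rcons w' a).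
Proof.
case: C => R [r s t c] /= H; rewrite -!cats1; exact: c.
Qed.

(* sigma_C([w]_C)(a) := the class {v | exists w in the class, C (w a) v} = [wa]_C *)
Definition Msig_set (C : congr) (S : Mcar C) (a : Sigma) : word -> Prop :=
  fun v => exists w, proj1_sig S = crel C w /\ C (rcons w a) v.

Lemma Msig_ok (C : congr) (S : Mcar C) (a : Sigma) :
  exists w, Msig_set S a = crel C w.
Proof.
case: S => S [w0 HS]; exists (rcons w0 a).
have [r s t c] := crel_cong C.
apply: functional_extensionality => v; apply: propositional_extensionality.
rewrite /Msig_set /=; split.
- case=> w [Hw Hv]; apply: t Hv; apply: congr_rcons.
  by rewrite HS in Hw; rewrite Hw; apply: r.
- by move=> Hv; exists w0; split.
Qed.

Definition Msig (C : congr) (S : Mcar C) (a : Sigma) : Mcar C :=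
  exist _ (Msig_set S a) (Msig_ok S a).

Definition Mobj (C : congr) : Aut := @MkAut (Mcar C) (cls C [::]) (@Msig C).

(* M on a morphism C <= D : [w]_C |-> [w]_D *)
Definition Mmap_set (C D : congr) (S : Mcar C) : word -> Prop :=
  fun v => exists w, proj1_sig S = crel C w /\ D w v.

Lemma Mmap_ok (C D : congr) (H : incl C D) (S : Mcar C) :
  exists w, Mmap_set D S = crel D w.
Proof.
case: S => S [w0 HS]; exists w0.
have [r s t c] := crel_cong D.
apply: functional_extensionality => v; apply: propositional_extensionality.
rewrite /Mmap_set /=; split.
- case=> w [Hw Hv]; apply: t Hv; apply: H.
  have HC : C w0 w by rewrite -HS Hw; apply: (let: And4 r' _ _ _ := crel_cong C in r').
  exact: HC.
- by move=> Hv; exists w0; split.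
Qed.

Definition Mmap (C D : congr) (H : incl C D) (S : Mcar C) : Mcar D :=
  exist _ (Mmap_set D S) (Mmap_ok H S).

End Automata.

(* Main.v *)
Require Import Defs.
From mathcomp Require Import all_boot.

From Stdlib Require Import FunctionalExtensionality PropExtensionality ProofIrrelevance IndefiniteDescription.
Set Implicit Arguments. Unset Strict Implicit.

Section H.
Variable Sigma : finType.

Lemma dstar_cat (A : Aut Sigma) (x : st A) u v : dstar x (u ++ v) = dstar (dstar x u) v.
Proof. by rewrite /dstar foldl_cat. Qed.

Lemma dstar_rcons (A : Aut Sigma) (x : st A) u a : dstar x (rcons u a) = trans (dstar x u) a.
Proof. by rewrite /dstar foldl_rcons. Qed.

Lemma morph_dstar (A B : Aut Sigma) (h : st A -> st B) : is_morph h ->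
  forall x u, h (dstar x u) = dstar (h x) u.
Proof.
move=> [_ Ht] x u; elim/last_ind: u => [|u a IH] //.
by rewrite !dstar_rcons Ht IH.
Qed.

Lemma Mcar_eq (C : congr Sigma) (S T : Mcar C) : proj1_sig S = proj1_sig T -> S = T.
Proof.
case: S T => S pS [T pT] /= E; subst T; f_equal; apply: proof_irrelevance.
Qed.

Lemma Mcar_cls (C : congr Sigma) (S : Mcar C) : exists w, S = cls C w.
Proof. case: (S) => T [w E]; exists w; apply: Mcar_eq => /=; exact: E. Qed.

Lemma cls_eq (C : congr Sigma) w w' : C w w' -> cls C w = cls C w'.
Proof.
move=> Hw; have [r s t c] := crel_cong C.
apply: Mcar_eq => /=; apply: functional_extensionality => v;
apply: propositional_extensionality; split => H.
- by apply: t H; apply: s.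
- exact: t Hw H.
Qed.

Lemma cls_inv (C : congr Sigma) w w' : crel C w = crel C w' -> C w w'.
Proof.
move=> E; have [r s t c] := crel_cong C.
by apply: s; rewrite -E; apply: r.
Qed.

Lemma Msig_cls (C : congr Sigma) w a : @trans Sigma (Mobj C) (cls C w) a = cls C (rcons w a).
Proof.
have [r s t c] := crel_cong C.
apply: Mcar_eq => /=; apply: functional_extensionality => v;
apply: propositional_extensionality; rewrite /Msig_set /=; split.
- case=> w0 [E Hv]; apply: t Hv; apply: congr_rcons; apply: s; exact: cls_inv.
- by move=> Hv; exists w; split.
Qed.

Lemma dstar_cls (C : congr Sigma) w u : @dstar Sigma (Mobj C) (cls C w) u = cls C (w ++ u).
Proof.
elim/last_ind: u => [|u a IH]; first by rewrite cats0.
by rewrite dstar_rcons IH Msig_cls rcons_cat.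
Qed.

Lemma Mmap_cls (C D : congr Sigma) (H : incl C D) w : Mmap H (cls C w) = cls D w.
Proof.
have [r s t c] := crel_cong D.
apply: Mcar_eq => /=; apply: functional_extensionality => v;
apply: propositional_extensionality; rewrite /Mmap_set /=; split.
- case=> w0 [E Hv]; apply: t Hv; apply: H; exact: cls_inv.
- by move=> Hv; exists w; split.
Qed.

End H.

Theorem mainTheorem1 (Sigma : finType) :
  (* T is well defined on objects: ker delta^# is a congruence on Sigma^* *)
  (forall A : Aut Sigma, reachable A -> is_congruence (ker A)) /\
  (* T is well defined on morphisms: h : A -> B gives ker delta_A^# <= ker delta_B^# *)
  (forall (A B : Aut Sigma) (h : st A -> st B),
      reachable A -> reachable B -> is_morph h -> incl (ker A) (ker B)) /\
  (* M is well defined on objects: M(C) = (Sigma^*/C, [eps]_C, sigma_C) is a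
     reachable pointed automaton with sigma_C([w]_C)(a) = [wa]_C *)
  (forall C : congr Sigma,
      reachable (Mobj C) /\ init (Mobj C) = cls C [::] /\
      (forall (w : seq Sigma) (a : Sigma),
          @trans Sigma (Mobj C) (cls C w) a = cls C (rcons w a))) /\
  (* M is well defined on morphisms: [w]_C |-> [w]_D is a morphism M(C) -> M(D) *)
  (forall (C D : congr Sigma) (H : incl C D),
      @is_morph Sigma (Mobj C) (Mobj D) (Mmap H) /\
      (forall w : seq Sigma, Mmap H (cls C w) = cls D w)) /\
  (* M preserves identities and composition (T does trivially, C being a preorder) *)
  (forall (C : congr Sigma) (H : incl C C) (x : Mcar C), Mmap H x = x) /\
  (forall (C D E : congr Sigma) (H1 : incl C D) (H2 : incl D E) (H3 : incl C E)
          (x : Mcar C), Mmap H3 x = Mmap H2 (Mmap H1 x)) /\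
  (* M -| T : unit eta_C : C <= T(M(C)) ... *)
  (forall C : congr Sigma, incl C (ker (Mobj C))) /\
  (* ... universal property: every C <= T(A) factors through a unique M(C) -> A *)
  (forall (C : congr Sigma) (A : Aut Sigma), reachable A ->
      incl C (ker A) ->
      exists h : Mcar C -> st A,
        @is_morph Sigma (Mobj C) A h /\
        (forall h' : Mcar C -> st A, @is_morph Sigma (Mobj C) A h' -> h' = h)) /\
  (* and conversely a morphism M(C) -> A yields C <= T(A) (hom-set bijection) *)
  (forall (C : congr Sigma) (A : Aut Sigma) (h : Mcar C -> st A), reachable A ->
      @is_morph Sigma (Mobj C) A h -> incl C (ker A)).
Proof.
split.
  move=> A _; split.
  - by [].
  - by move=> u v H x.
  - by move=> u v w H1 H2 x; rewrite H1.
  - by move=> u u' v v' H1 H2 x; rewrite !dstar_cat H1 H2.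
split.
  move=> A B h _ rB hm u v Huv y; have [w ->] := rB y.
  have [hi _] := hm.
  by rewrite -hi -!morph_dstar // -!dstar_cat !dstar_cat Huv.
split.
  move=> C; split; last split => //; last exact: Msig_cls.
  move=> x; have [w ->] := Mcar_cls x; exists w; by rewrite /= dstar_cls.
split.
  move=> C D H; split; last exact: Mmap_cls.
  split; first exact: Mmap_cls.
  move=> x a; have [w ->] := Mcar_cls x.
  by rewrite Msig_cls !Mmap_cls Msig_cls.
split.
  by move=> C H x; have [w ->] := Mcar_cls x; rewrite Mmap_cls.
split.
  by move=> C D E H1 H2 H3 x; have [w ->] := Mcar_cls x; rewrite !Mmap_cls.
split.
  move=> C u v Huv x; have [w ->] := Mcar_cls x.
  have [r s t c] := crel_cong C.
  rewrite !dstar_cls; apply: cls_eq; apply: c => //; exact: r.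
split.
  move=> C A _ HC.
  pose h (S : Mcar C) : st A :=
    dstar (init A) (proj1_sig (constructive_indefinite_description _ (proj2_sig S))).
  have hcls : forall w, h (cls C w) = dstar (init A) w.
    move=> w; rewrite /h; case: constructive_indefinite_description => w' /= E.
    symmetry; rewrite /dstar -/(dstar _ w) -/(dstar _ w'); apply: HC; exact: cls_inv.
  exists h; split.
    split; first by rewrite /= hcls.
    by move=> x a; have [w ->] := Mcar_cls x; rewrite Msig_cls !hcls dstar_rcons.
  move=> h' hm; apply: functional_extensionality => x; have [w ->] := Mcar_cls x.
  rewrite hcls; have [hi _] := hm.
  by rewrite -hi -morph_dstar // /= dstar_cls.
move=> C A h rA hm u v Huv y; have [w ->] := rA y.
have [hi _] := hm; have [r s t c] := crel_cong C.
rewrite -hi -!morph_dstar // !dstar_cls; congr h; apply: cls_eq; apply: c => //; exact: r.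
Qed.
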